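(* Let $c>0$ be constant. There exist constants $b_1,b_2,b_3>0$ depending only on $c$ such that for all sufficiently large $n$, at every time $t$ with $Z^t\ge1$, conditional on $(x^t,\lambda^t)$: $\Pr[\bar A]\le e^{-b_1\lambda^t}$ and $e^{-b_2\lambda^t Z^t/n}\le\Pr[\bar B]\le e^{-b_3\lambda^t Z^t/n}$. Moreover $\Pr[f^t(x^{t+1})\le f^t(x^t)]\le \exp\!\big(-\tfrac12 c e^{-c}\lfloor\lambda^t\rceil Z^t/n\big)$.
   Context: Consider the SA-$(1,\lambda)$-EA on a dynamic monotone function: a function $f:\{0,1\}^n\to\mathbb R$ is monotone if $f(x)>f(y)$ whenever $x\ne y$ and $x_i\ge y_i$ for all $i$; $(f^t)_{t\ge0}$ is a sequence of monotone functions, $f^t$ possibly chosen adversarially depending on $x^t$. The algorithm (with constants $c>0$, $s>0$, $F>1$) maintains $x^t\in\{0,1\}^n$, real $\lambda^t\ge1$; in generation $t$ it creates $\lfloor\lambda^t\rceil$ (nearest integer) offspring $y^{t,j}$, each independently by flipping every bit of $x^t$ independently with probability $c/n$; $x^{t+1}$ is an offspring maximizing $f^t$ (ties uniformly at random); $\lambda^{t+1}=\max\{1,\lambda^t/F\}$ if $f^t(x^{t+1})>f^t(x^t)$, else $\lambda^{t+1}=F^{1/s}\lambda^t$. $Z^t$ is the number of zero-bits of $x^t$. $A$ is the event that some offspring $y^{t,j}$ flips no one-bit of $x^t$ (i.e. $\{i:x^t_i=1\}\subseteq\{i:y^{t,j}_i=1\}$); $B$ is the event that some offspring flips at least one zero-bit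 of $x^t$ (there are $j,i$ with $x^t_i=0$, $y^{t,j}_i=1$). *)

(* Defs.v *)
From mathcomp Require Import all_boot all_order all_algebra.
From mathcomp Require Import reals.
From mathcomp Require Import sequences exp.
Set Implicit Arguments. Unset Strict Implicit. Unset Printing Implicit Defensive.
Import Order.TTheory GRing.Theory Num.Theory.
Local Open Scope ring_scope.

Notation bits n := {ffun 'I_n -> bool}.

(* Nearest integer of a nonnegative real (ties rounded up): floor(lam + 1/2). *)
Definition round_nat (R : realType) (lam : R) : nat := Num.truncn (lam + 2^-1).

Definition zeros n (x : bits n) : nat := #|[pred i | ~~ x i]|.

Definition monotone_fun (R : realType) n (f : bits n -> R) : Prop :=
  forall x y : bits n, x != y -> (forall i, y i ==> x i) -> f y < f x.

(* The random choices of one generation: k flip masks, one per offspring;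
   m j i = true iff offspring j flips bit i. *)
Notation masks k n := {ffun 'I_k -> bits n}.

Definition offspring n k (x : bits n) (m : masks k n) (j : 'I_k) : bits n :=
  [ffun i => x i (+) m j i].

(* Probability (under standard bit mutation with rate p, all bits of all k
   offspring flipped independently) of the event E on flip masks. *)
Definition mutPr (R : realType) n k (p : R) (E : pred (masks k n)) : R :=
  \sum_(m : masks k n | E m) \prod_(j < k) \prod_(i < n) (if m j i then p else 1 - p).

Definition evA n k (x : bits n) : pred (masks k n) :=
  fun m => [exists j, forall i, x i ==> offspring x m j i].

Definition evB n k (x : bits n) : pred (masks k n) :=
  fun m => [exists j, exists i, ~~ x i && offspring x m j i].

(* Main.v *)
Require Import Defs.
From mathcomp Require Import all_boot all_order all_algebra.
From mathcomp Require Import reals sequences exp.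
From mathcomp Require Import ring lra.
Set Implicit Arguments. Unset Strict Implicit. Unset Printing Implicit Defensive.
Import Order.TTheory GRing.Theory Num.Theory.
Local Open Scope ring_scope.

Section Aux.
Variable R : realType.

Lemma sum_ffun_forall (I J : finType) (P : I -> pred J) (F : I -> J -> R) :
  \sum_(f : {ffun I -> J} | [forall i, P i (f i)]) \prod_i F i (f i)
  = \prod_i \sum_(j | P i j) F i j.
Proof.
transitivity (\prod_i \sum_j (if P i j then F i j else 0)); last first.
  by apply: eq_bigr => i _; rewrite [in RHS]big_mkcond.
rewrite bigA_distr_bigA big_mkcond /=; apply: eq_bigr => f _.
case: (boolP [forall i, P i (f i)]) => [/forallP H | /forallPn [i Hi]].
  by apply: eq_bigr => i _; rewrite H.
by rewrite (bigD1 i) //= (negbTE Hi) mul0r.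
Qed.

Definition w (p : R) (b : bool) : R := if b then p else 1 - p.
Definition Pr1 n (p : R) (P : pred (bits n)) : R :=
  \sum_(b : bits n | P b) \prod_(i < n) w p (b i).

Lemma mutPr_forall n k (p : R) (P : pred (bits n)) (E : pred (masks k n)) :
  (forall m, E m = [forall j, P (m j)]) ->
  mutPr p E = Pr1 p P ^+ k.
Proof.
move=> HE; rewrite /mutPr (eq_bigl _ _ HE) /=.
rewrite (sum_ffun_forall (fun _ => P) (fun _ b => \prod_(i < n) w p (b i))).
by rewrite prodr_const card_ord.
Qed.

Lemma Pr1_Q n (p : R) (S : pred 'I_n) :
  Pr1 p (fun b => [forall i, S i ==> ~~ b i]) = (1 - p) ^+ #|[pred i | S i]|.
Proof.
rewrite /Pr1 (sum_ffun_forall (fun i t => S i ==> ~~ t) (fun _ t => w p t)).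
rewrite -[RHS]prodr_const [RHS]big_mkcond /=.
apply: eq_bigr => i _; rewrite big_mkcond big_bool /= inE /w.
by case: (S i) => /=; rewrite ?addr0 ?add0r // addrC subrK.
Qed.

Lemma w_ge0 (p : R) b : 0 <= p <= 1 -> 0 <= w p b.
Proof. by case/andP=> h0 h1; case: b => //=; rewrite subr_ge0. Qed.

Lemma Pr1_T n (p : R) : Pr1 p (fun _ : bits n => true) = 1.
Proof.
have h := Pr1_Q p (fun _ : 'I_n => false).
rewrite (_ : #|_| = 0%N) ?expr0 in h; last by apply: eq_card0.
by rewrite -h; apply: eq_bigl => b; symmetry; apply/forallP.
Qed.

Lemma Pr1_C n (p : R) (P : pred (bits n)) :
  Pr1 p (fun b => ~~ P b) = 1 - Pr1 p P.
Proof.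
rewrite -(Pr1_T n p) /Pr1 (bigID P predT) /=.
by rewrite addrC addrK.
Qed.

Lemma Pr1_D n (p : R) (P Q : pred (bits n)) : (forall b, Q b -> P b) ->
  Pr1 p (fun b => P b && ~~ Q b) = Pr1 p P - Pr1 p Q.
Proof.
move=> hQP; rewrite /Pr1 [X in _ = X - _](bigID Q) /=.
rewrite [X in _ = X + _ - _](eq_bigl Q); first by rewrite addrC addKr.
by move=> b; apply/andP/idP => [[]//|hq]; split => //; apply: hQP.
Qed.

Lemma Pr1_ge0 n (p : R) (P : pred (bits n)) : 0 <= p <= 1 -> 0 <= Pr1 p P.
Proof.
by move=> hp; apply: sumr_ge0 => b _; apply: prodr_ge0 => i _; apply: w_ge0.
Qed.

Lemma mutPr_le n k (p : R) (E1 E2 : pred (masks k n)) : 0 <= p <= 1 ->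
  (forall m, E1 m -> E2 m) -> mutPr p E1 <= mutPr p E2.
Proof.
move=> hp h; rewrite /mutPr [X in X <= _]big_mkcond [X in _ <= X]big_mkcond.
apply: ler_sum => m _; case: (boolP (E1 m)) => [/h -> //|_].
by case: (E2 m) => //; apply: prodr_ge0 => j _; apply: prodr_ge0 => i _; apply: w_ge0.
Qed.

Lemma L1 (p : R) : 0 <= p < 1 -> expR (- (p / (1 - p))) <= 1 - p.
Proof.
case/andP=> h0 h1; have hq : 0 < 1 - p by rewrite subr_gt0.
rewrite expRN -[X in X <= _]mul1r ler_pdivrMr ?expR_gt0 //.
apply: le_trans (_ : (1 - p) * (1 + p / (1 - p)) <= _).
  by rewrite mulrDr mulr1 mulrCA divff ?mulr1 ?subrK // gt_eqF.
by rewrite ler_pM2l // expR_ge1Dx.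
Qed.

Lemma L2 (a q : R) m : expR (- a) <= q -> expR (- (a * m%:R)) <= q ^+ m.
Proof.
move=> h; rewrite -mulNr expRM_natr; apply: lerXn2r => //.
  by rewrite nnegrE ltW // expR_gt0.
by rewrite nnegrE (le_trans _ h) // ltW // expR_gt0.
Qed.

Lemma L3 (p q : R) m : 0 <= q -> q <= expR (- p) -> q ^+ m <= expR (- (p * m%:R)).
Proof.
move=> h0 h; rewrite -mulNr expRM_natr; apply: lerXn2r => //.
by rewrite nnegrE ltW // expR_gt0.
Qed.

Lemma L4 (y : R) k : y <= 1 -> (1 - y) ^+ k <= expR (- (y * k%:R)).
Proof.
move=> h; apply: L3; first by rewrite subr_ge0.
exact: expR_ge1Dx.
Qed.

Lemma L5 (q : R) Z : 0 <= q <= 1 -> Z%:R * (1 - q) * q ^+ Z <= 1 - q ^+ Z.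
Proof.
case/andP=> h0 h1; elim: Z => [|Z IH]; first by rewrite mul0r mul0r subrr.
have hu : 0 <= q ^+ Z by apply: exprn_ge0.
have hu1 : q ^+ Z <= 1 by apply: exprn_ile1.
rewrite exprS -natr1.
have h2 : 0 <= (1 - q) by rewrite subr_ge0.
have h3 : 0 <= (Z%:R + 1) * (1 - q) * q ^+ Z * (1 - q).
  by rewrite !mulr_ge0 // addr_ge0.
nra.
Qed.

Lemma PrA n k (p : R) (x : bits n) :
  mutPr p (fun m : masks k n => ~~ evA x m)
  = (1 - (1 - p) ^+ #|[pred i | x i]|) ^+ k.
Proof.
rewrite (@mutPr_forall n k p (fun b => ~~ [forall i, x i ==> ~~ b i])).
  by rewrite Pr1_C Pr1_Q.
move=> m; rewrite /evA negb_exists; apply: eq_forallb => j; congr (~~ _).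
by apply: eq_forallb => i; rewrite /offspring ffunE; case: (x i).
Qed.

Lemma PrB n k (p : R) (x : bits n) :
  mutPr p (fun m : masks k n => ~~ evB x m) = ((1 - p) ^+ zeros x) ^+ k.
Proof.
rewrite (@mutPr_forall n k p (fun b => [forall i, ~~ x i ==> ~~ b i])).
  by rewrite Pr1_Q.
move=> m; rewrite /evB negb_exists; apply: eq_forallb => j.
rewrite negb_exists; apply: eq_forallb => i.
by rewrite /offspring ffunE; case: (x i).
Qed.

Lemma PrSel n k (p : R) (x : bits n) (E : pred (masks k n)) :
  0 <= p <= 1 ->
  (forall m j, E m -> ~~ ([forall i, x i ==> ~~ m j i] && ~~ [forall i, true ==> ~~ m j i])) ->
  mutPr p E <= (1 - ((1 - p) ^+ #|[pred i | x i]| - (1 - p) ^+ n)) ^+ k.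
Proof.
move=> hp hE.
set D := (fun b : bits n => [forall i, x i ==> ~~ b i] && ~~ [forall i, true ==> ~~ b i]).
have -> : 1 - ((1 - p) ^+ #|[pred i | x i]| - (1 - p) ^+ n) = Pr1 p (fun b => ~~ D b).
  rewrite Pr1_C /D Pr1_D ?Pr1_Q.
    have -> : #|[pred i : 'I_n | true]| = n by rewrite -[RHS](card_ord n); apply: eq_card.
    by [].
  by move=> b /forallP h; apply/forallP => i; apply/implyP => _; exact: (implyP (h i)).
rewrite -(@mutPr_forall n k p _ (fun m => [forall j, ~~ D (m j)])) //.
apply: mutPr_le => // m hm; apply/forallP => j; exact: hE.
Qed.

Lemma sel_ev n k (x : bits n) (f : bits n -> R) (sel : masks k n -> 'I_k) :
  monotone_fun f ->
  (forall m j, f (offspring x m j) <= f (offspring x m (sel m))) ->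
  forall m j, f (offspring x m (sel m)) <= f x ->
  ~~ ([forall i, x i ==> ~~ m j i] && ~~ [forall i, true ==> ~~ m j i]).
Proof.
move=> hf hsel m j hle; apply/negP => /andP [/forallP h1 /forallPn [i0 hi0]].
have hmi : m j i0 by move: hi0; case: (m j i0).
have hne : offspring x m j != x.
  apply/eqP => e; have := congr1 (fun g : bits n => g i0) e.
  by rewrite /offspring ffunE hmi; case: (x i0).
have hge : forall i, x i ==> offspring x m j i.
  move=> i; rewrite /offspring ffunE; apply/implyP => xi.
  by move: (implyP (h1 i) xi); rewrite xi; case: (m j i).
have := hf _ _ hne hge.
by rewrite ltNge (le_trans (hsel m j) hle).
Qed.
End Aux.

Unset Implicit Arguments.
Theorem mainTheorem7 (R : realType) (c : R) (hc : 0 < c) :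
  exists b1 b2 b3 : R, [/\ 0 < b1, 0 < b2 & 0 < b3] /\
  exists N : nat, forall n : nat, (N <= n)%N ->
  forall (x : bits n) (lam : R), (1 <= zeros x)%N -> 1 <= lam ->
    let k := round_nat lam in
    let p := c / n%:R in
    [/\ mutPr p (fun m : masks k n => ~~ evA x m) <= expR (- (b1 * lam)),
        expR (- (b2 * lam * (zeros x)%:R / n%:R))
          <= mutPr p (fun m : masks k n => ~~ evB x m),
        mutPr p (fun m : masks k n => ~~ evB x m)
          <= expR (- (b3 * lam * (zeros x)%:R / n%:R))
      & forall (f : bits n -> R), monotone_fun f ->
        forall sel : masks k n -> 'I_k,
          (forall m j, f (offspring x m j) <= f (offspring x m (sel m))) ->
          mutPr p (fun m : masks k n => f (offspring x m (sel m)) <= f x)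
            <= expR (- (2^-1 * c * expR (- c) * k%:R * (zeros x)%:R / n%:R))].
Proof.
have hE : 0 < expR (- c) by apply: expR_gt0.
have hE1 : expR (- c) <= 1 by rewrite expR_le1 oppr_le0 ltW.
exists (expR (- c) / 4), (4 * c), (c / 2).
split; first by split; lra.
exists (Num.truncn (4 * c ^+ 2 + 2 * c)).+1 => n hn x lam hz hlam k p.
set nr := n%:R.
have hnr : 4 * c ^+ 2 + 2 * c < nr.
  apply: lt_le_trans (truncnS_gt _) _; by rewrite /nr ler_nat.
have hc2 : 0 <= c ^+ 2 by apply: sqr_ge0.
have hn0 : 0 < nr by nra.
have hpn : p * nr = c by rewrite /p mulfVK // gt_eqF.
have hp0 : 0 < p by rewrite /p divr_gt0.
have hp2 : 2 * p < 1 by nra.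
have hcp : 4 * c * p < 1 by nra.
set q := 1 - p.
have hq0 : 0 <= q by rewrite /q; lra.
have hq1 : q <= 1 by rewrite /q; lra.
set a := p / (1 - p).
have ha : a * (1 - p) = p by rewrite /a mulfVK // gt_eqF // subr_gt0; lra.
have ha0 : 0 <= a by rewrite /a divr_ge0 //; lra.
have ha2 : a <= 2 * p by nra.
have hqa : expR (- a) <= q by apply: L1; lra.
have hqe : expR (- (2 * p)) <= q.
  by apply: le_trans hqa; rewrite ler_expR lerN2.
have hqn : expR (- c) / 2 <= q ^+ n.
  apply: le_trans (L2 n hqa); rewrite -/nr.
  have -> : a * nr = c + a * c by nra.
  rewrite opprD expRD.
  have h1 : 1 - a * c <= expR (- (a * c)) by apply: expR_ge1Dx.
  have h2 : a * c <= 2^-1 by nra.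
  nra.
have hk1 : k%:R <= lam + 2^-1.
  by rewrite /k /round_nat truncn_le; lra.
have hk2 : lam + 2^-1 < k%:R + 1.
  by rewrite /k /round_nat natr1; apply: truncnS_gt.
set Z := zeros x.
set o := #|[pred i | x i]|.
have hoZ : (o + Z = n)%N.
  rewrite /o /Z /zeros -[RHS](card_ord n) -(cardC [pred i | x i]).
  by congr (_ + _)%N; apply: eq_card.
have hZ1 : 1 <= Z%:R :> R by rewrite ler1n.
have hon : (o <= n)%N by rewrite -hoZ leq_addr.
have hqo : q ^+ n <= q ^+ o by apply: ler_wiXn2l.
have hqo1 : q ^+ o <= 1 by apply: exprn_ile1.
have hqn0 : 0 <= q ^+ n by apply: exprn_ge0.
have hp01 : 0 <= p <= 1 by apply/andP; split; lra.
split.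
- rewrite PrA -/q -/o.
  apply: le_trans (_ : (1 - expR (- c) / 2) ^+ k <= _).
    apply: lerXn2r; rewrite ?nnegrE; lra.
  apply: le_trans (L4 k _) _; first lra.
  rewrite ler_expR lerN2; nra.
- rewrite PrB -exprM.
  apply: le_trans (L2 (Z * k)%N hqe); rewrite ler_expR lerN2 natrM.
  have -> : 4 * c * lam * Z%:R / nr = 4 * p * lam * Z%:R.
    by rewrite -hpn; field; rewrite gt_eqF.
  have hk0 : 0 <= k%:R :> R by apply: ler0n.
  have : 0 <= (2 * p * Z%:R) * (2 * lam - k%:R) by apply: mulr_ge0; nra.
  nra.
- rewrite PrB -exprM.
  have hqu : q <= expR (- p) by apply: expR_ge1Dx.
  apply: le_trans (L3 (Z * k)%N hq0 hqu) _; rewrite ler_expR lerN2 natrM.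
  have -> : c / 2 * lam * Z%:R / nr = 2^-1 * p * lam * Z%:R.
    by rewrite -hpn; field; rewrite gt_eqF.
  have : 0 <= (p * Z%:R) * (k%:R - 2^-1 * lam) by apply: mulr_ge0; nra.
  nra.
- move=> f hf sel hsel.
  apply: le_trans (PrSel (E := fun m => f (offspring x m (sel m)) <= f x) hp01 _) _.
    by move=> m j hm; apply: (sel_ev hf hsel).
  rewrite -/q -/o; set g := q ^+ o - q ^+ n.
  apply: le_trans (L4 k _) _; first by rewrite /g; lra.
  rewrite ler_expR lerN2.
  have hZq : 0 <= q ^+ Z by apply: exprn_ge0.
  have hg : Z%:R * p * q ^+ n <= g.
    have h5 : Z%:R * (1 - q) * q ^+ Z <= 1 - q ^+ Z by apply: L5; apply/andP.
    have e : q ^+ n = q ^+ o * q ^+ Z by rewrite -exprD hoZ.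
    have -> : g = q ^+ o * (1 - q ^+ Z) by rewrite /g e; ring.
    rewrite e.
    have -> : Z%:R * p * (q ^+ o * q ^+ Z) = q ^+ o * (Z%:R * p * q ^+ Z) by ring.
    apply: ler_wpM2l; first by apply: exprn_ge0.
    by move: h5; rewrite (_ : 1 - q = p) //; rewrite /q; ring.
  have -> : 2^-1 * c * expR (- c) * k%:R * Z%:R / nr
          = (Z%:R * p * (expR (- c) / 2)) * k%:R.
    by rewrite -hpn; field; rewrite gt_eqF.
  apply: ler_wpM2r; first by apply: ler0n.
  apply: le_trans hg.
  apply: ler_wpM2l => //; apply: mulr_ge0; [apply: ler0n | lra].
Qed.
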